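(* Let $\widehat V$ be the total space of $\mathcal{O}_{\mathbb{P}^1}(-1)^{\oplus 2}\to\mathbb{P}^1$ with projection $\pi:\widehat V\to\mathbb{P}^1$, let $a>0$, and let $f:[0,\infty)\to\mathbb{R}$ be a smooth function such that for all $\tau\ge 0$ \[ f'(\tau)>0,\qquad f'(\tau)+\tau f''(\tau)>0,\qquad \big(4a^2+\tau f'(\tau)\big)\big(f'(\tau)^2+\tau f'(\tau)f''(\tau)\big)=c \] for some constant $c>0$. Then \[ \omega_{co,a}=4a^2\,\pi^*\omega_{FS}+\sqrt{-1}\partial\bar\partial\, f(\tau) \] is a Kähler metric on $\widehat V$ which is Calabi-Yau: $\omega_{co,a}^3$ is a constant positive multiple of $(\sqrt{-1})^{9}\Omega\wedge\overline{\Omega}$, where $\Omega$ is a nowhere-vanishing holomorphic $(3,0)$-form on $\widehat V$; in particular $\omega_{co,a}$ is Ricci-flat.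
   Context: A point of $\widehat V$ is a triple $(\ell,s_1,s_2)$ with $\ell\in\mathbb{P}^1$ a line in $\mathbb{C}^2$ and $s_1,s_2\in\ell\subset\mathbb{C}^2$. The function $\tau:\widehat V\to[0,\infty)$ is $\tau=\|s_1\|^2+\|s_2\|^2$ (Euclidean norm on $\mathbb{C}^2$, i.e. the Fubini-Study hermitian metric on $\mathcal{O}(-1)$); in the chart $\{[X_1:X_2]: X_1\ne0\}$ with affine coordinate $u=X_2/X_1$ and $s_j=w_j(1,u)$, one has $\tau=(1+|u|^2)(|w_1|^2+|w_2|^2)$. $\omega_{FS}$ is the Fubini-Study form on $\mathbb{P}^1$, equal to $\sqrt{-1}\partial\bar\partial\log(1+|u|^2)$ in this chart. $\Omega$ is given in this chart by $du\wedge dw_1\wedge dw_2$ (up to sign), and analogously on the other chart. *)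

(* Defs.v *)
From Stdlib Require Import Reals.
From Coquelicot Require Import Coquelicot.
Open Scope R_scope.

(* A point of a coordinate chart of Vhat = Tot(O(-1)+O(-1)) is (u, w1, w2) in C^3,
   encoded by real coordinates p 0 .. p 5 (the remaining entries are irrelevant):
     u = p 0 + i p 1,  w1 = p 2 + i p 3,  w2 = p 4 + i p 5.
   Both standard charts ({X1<>0} with u = X2/X1, s_j = w_j (1,u), and
   {X2<>0} with v = X1/X2, s_j = w_j (v,1)) give exactly the same formulas below,
   so quantifying over all points p of this model chart covers both charts. *)
Definition pt := nat -> R.

Definition upd (p : pt) (i : nat) (t : R) : pt :=
  fun k => if Nat.eqb k i then t else p k.

Definition pd (i : nat) (F : pt -> R) (p : pt) : R :=
  Derive (fun t => F (upd p i t)) (p i).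

(* Coefficient of the (1,1)-form sqrt(-1) d dbar phi:
     sqrt(-1) d dbar phi = sqrt(-1) sum_{j,k} (d^2 phi / dz_j d zbar_k) dz_j /\ dzbar_k,
   with d/dz_j = 1/2 (d/dx_j - i d/dy_j), d/dzbar_k = 1/2 (d/dx_k + i d/dy_k),
   z_j = x_(2j) + i x_(2j+1). *)
Definition ddbar (phi : pt -> R) (j k : nat) (p : pt) : C :=
  let xj := (2 * j)%nat in let yj := (2 * j + 1)%nat in
  let xk := (2 * k)%nat in let yk := (2 * k + 1)%nat in
  (/4 * (pd xj (pd xk phi) p + pd yj (pd yk phi) p),
   /4 * (pd xj (pd yk phi) p - pd yj (pd xk phi) p)).

(* tau = |s1|^2 + |s2|^2 = (1+|u|^2)(|w1|^2+|w2|^2) *)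
Definition tau (p : pt) : R :=
  (1 + (p 0%nat)^2 + (p 1%nat)^2) *
  ((p 2%nat)^2 + (p 3%nat)^2 + (p 4%nat)^2 + (p 5%nat)^2).

(* Kaehler potential of pi^* omega_FS : log(1+|u|^2) *)
Definition phiFS (p : pt) : R := ln (1 + (p 0%nat)^2 + (p 1%nat)^2).

Definition omega_co (a : R) (f : R -> R) (j k : nat) (p : pt) : C :=
  Cplus (RtoC (4 * a^2) * ddbar phiFS j k p)%C (ddbar (fun q => f (tau q)) j k p).

Definition sum3 (F : nat -> C) : C := (F 0%nat + F 1%nat + F 2%nat)%C.

Definition herm_form (g : nat -> nat -> C) (xi : nat -> C) : R :=
  Re (sum3 (fun j => sum3 (fun k => g j k * xi j * Cconj (xi k))))%C.

Definition det3 (g : nat -> nat -> C) : C :=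
  (g 0%nat 0%nat * (g 1%nat 1%nat * g 2%nat 2%nat - g 1%nat 2%nat * g 2%nat 1%nat)
 - g 0%nat 1%nat * (g 1%nat 0%nat * g 2%nat 2%nat - g 1%nat 2%nat * g 2%nat 0%nat)
 + g 0%nat 2%nat * (g 1%nat 0%nat * g 2%nat 1%nat - g 1%nat 1%nat * g 2%nat 0%nat))%C.

(* Top-degree forms in the chart are written as multiples of the standard volume form
     vol = (i du/\du^bar) /\ (i dw1/\dw1^bar) /\ (i dw2/\dw2^bar).
   For omega = i sum g_{jkbar} dz_j/\dzbar_k one has omega^3 = 3! det(g) vol. *)
Definition omega_cubed_coeff (a : R) (f : R -> R) (p : pt) : C :=
  (RtoC 6 * det3 (fun j k => omega_co a f j k p))%C.

(* Omega = du/\dw1/\dw2 (up to sign; dv/\dw1'/\dw2' on the other chart), and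
   (sqrt -1)^9 Omega /\ Omega^bar = vol exactly (the reordering sign -1 times
   i^9 * i^(-3) = -1), so its coefficient is 1 everywhere. *)
Definition OmegaOmegabar_coeff (p : pt) : C := RtoC 1.

Definition smooth_fun (f : R -> R) : Prop := forall n x, ex_derive_n f n x.

(* Main.v *)
Require Import Defs.
From Stdlib Require Import Reals Lra Lia Psatz FunctionalExtensionality.
From Coquelicot Require Import Coquelicot.
Open Scope R_scope.
From Stdlib Require Import Psatz.

Definition rho (q : pt) := 1 + (q 0%nat)^2 + (q 1%nat)^2.
Definition rr (q : pt) := (q 2%nat)^2 + (q 3%nat)^2 + (q 4%nat)^2 + (q 5%nat)^2.

Definition dtau (k : nat) (q : pt) : R :=
  if Nat.ltb k 2 then 2 * q k * rr q else 2 * q k * rho q.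

Definition d2tau (i k : nat) (q : pt) : R :=
  (if Nat.eqb i k then (if Nat.ltb k 2 then 2 * rr q else 2 * rho q) else 0) +
  (if orb (andb (Nat.ltb i 2) (negb (Nat.ltb k 2))) (andb (Nat.ltb k 2) (negb (Nat.ltb i 2)))
   then 4 * q i * q k else 0).

Definition dphi (k : nat) (q : pt) : R :=
  if Nat.ltb k 2 then 2 * q k / rho q else 0.

Definition d2phi (i k : nat) (q : pt) : R :=
  if andb (Nat.ltb i 2) (Nat.ltb k 2) then
    (if Nat.eqb i k then 2 / rho q else 0) - 4 * q i * q k / (rho q)^2
  else 0.

Lemma tau_d k q : (k < 6)%nat ->
  is_derive (fun t => tau (upd q k t)) (q k) (dtau k q).
Proof.
  intros Hk.
  do 6 (destruct k as [|k]; [unfold tau, upd, dtau, rr, rho; simpl; auto_derive; [trivial|ring] |]).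
  lia.
Qed.

Lemma dtau_d i k q : (i < 6)%nat -> (k < 6)%nat ->
  is_derive (fun t => dtau k (upd q i t)) (q i) (d2tau i k q).
Proof.
  intros Hi Hk.
  do 6 (destruct i as [|i]; [
  do 6 (destruct k as [|k]; [unfold d2tau, upd, dtau, rr, rho; simpl; auto_derive; [trivial|ring] |]); lia |]).
  lia.
Qed.

Lemma rho_pos q : 0 < 1 + (q 0%nat)^2 + (q 1%nat)^2.
Proof. nra. Qed.

Lemma phi_d k q : (k < 6)%nat ->
  is_derive (fun t => phiFS (upd q k t)) (q k) (dphi k q).
Proof.
  intros Hk.
  do 6 (destruct k as [|k]; [unfold phiFS, upd, dphi, rho; simpl; auto_derive; [try nra | field; nra] |]).
  lia.
Qed.

Lemma dphi_d i k q : (i < 6)%nat -> (k < 6)%nat ->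
  is_derive (fun t => dphi k (upd q i t)) (q i) (d2phi i k q).
Proof.
  intros Hi Hk.
  do 6 (destruct i as [|i]; [
  do 6 (destruct k as [|k]; [unfold d2phi, upd, dphi, rho; simpl; auto_derive; [try nra | field; nra] |]); lia |]).
  lia.
Qed.

Lemma upd_same q k : upd q k (q k) = q.
Proof.
  apply functional_extensionality; intro m; unfold upd.
  destruct (Nat.eqb m k) eqn:E; [apply Nat.eqb_eq in E; subst|]; reflexivity.
Qed.

Lemma pd_ext i F G : (forall q, is_derive (fun t => F (upd q i t)) (q i) (G q)) -> pd i F = G.
Proof.
  intros H; apply functional_extensionality; intro q; unfold pd.
  apply is_derive_unique, H.
Qed.

Lemma pd_phi k : (k < 6)%nat -> pd k phiFS = dphi k.
Proof. intros; apply pd_ext; intros; apply phi_d; auto. Qed.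

Lemma pd_dphi i k : (i < 6)%nat -> (k < 6)%nat -> pd i (dphi k) = d2phi i k.
Proof. intros; apply pd_ext; intros; apply dphi_d; auto. Qed.

Section F.
Variable f : R -> R.
Hypothesis sf : smooth_fun f.

Lemma pd_ftau k : (k < 6)%nat ->
  pd k (fun q => f (tau q)) = fun q => Derive f (tau q) * dtau k q.
Proof.
  intros Hk; apply pd_ext; intros q.
  replace (Derive f (tau q) * dtau k q) with (scal (dtau k q) (Derive f (tau (upd q k (q k))))).
  2:{ rewrite upd_same. unfold scal; simpl; unfold mult; simpl; ring. }
  apply (is_derive_comp f (fun t => tau (upd q k t))).
  - apply Derive_correct. apply (sf 1%nat).
  - apply tau_d; auto.
Qed.

Lemma pd_df i k : (i < 6)%nat -> (k < 6)%nat ->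
  pd i (fun q => Derive f (tau q) * dtau k q) =
  fun q => Derive_n f 2 (tau q) * dtau i q * dtau k q + Derive f (tau q) * d2tau i k q.
Proof.
  intros Hi Hk; apply pd_ext; intros q.
  assert (H := is_derive_mult (fun t => Derive f (tau (upd q i t))) (fun t => dtau k (upd q i t)) (q i)
     (scal (dtau i q) (Derive_n f 2 (tau (upd q i (q i))))) (d2tau i k q)).
  rewrite !upd_same in H. unfold scal, plus, mult in H; simpl in H; unfold mult in H; simpl in H.
  replace (Derive_n f 2 (tau q) * dtau i q * dtau k q + Derive f (tau q) * d2tau i k q)
    with (dtau i q * Derive_n f 2 (tau q) * dtau k q + Derive f (tau q) * d2tau i k q) by ring.
  apply H.
  - assert (H2 := is_derive_comp (Derive f) (fun t => tau (upd q i t)) (q i) (Derive_n f 2 (tau q)) (dtau i q)).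
    cbv beta in H2. rewrite upd_same in H2. apply H2.
    + apply Derive_correct. apply (sf 2%nat).
    + apply tau_d; auto.
  - apply dtau_d; auto.
  - intros; apply Rmult_comm.
Qed.
End F.

Definition Ef (f : R -> R) (i k : nat) (q : pt) : R :=
  Derive_n f 2 (tau q) * dtau i q * dtau k q + Derive f (tau q) * d2tau i k q.

Definition Gm (a : R) (f : R -> R) (j k : nat) (p : pt) : C :=
  (a^2 * (d2phi (2*j) (2*k) p + d2phi (2*j+1) (2*k+1) p)
     + /4 * (Ef f (2*j) (2*k) p + Ef f (2*j+1) (2*k+1) p),
   a^2 * (d2phi (2*j) (2*k+1) p - d2phi (2*j+1) (2*k) p)
     + /4 * (Ef f (2*j) (2*k+1) p - Ef f (2*j+1) (2*k) p)).

Lemma omega_entry a f j k p : smooth_fun f -> (j < 3)%nat -> (k < 3)%nat ->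
  omega_co a f j k p = Gm a f j k p.
Proof.
  intros sf Hj Hk. unfold omega_co, ddbar. cbv zeta.
  rewrite (pd_phi (2*k)), (pd_phi (2*k+1)) by lia.
  rewrite !pd_dphi by lia.
  rewrite (pd_ftau f sf (2*k)), (pd_ftau f sf (2*k+1)) by lia.
  rewrite !(pd_df f sf) by lia.
  unfold Gm, Ef, Cplus, Cmult, RtoC; simpl. apply injective_projections; simpl; field.
Qed.

Lemma sq0 z : z^2 = 0 -> z = 0.
Proof. intros; nra. Qed.

Lemma key (x y a1 b1 a2 b2 s t c1 d1 c2 d2 A F1 F2 : R) :
  let rh := 1 + x^2 + y^2 in
  let r := a1^2 + b1^2 + a2^2 + b2^2 in
  let BR := a1*c1+b1*d1+a2*c2+b2*d2 in
  let BI := b1*c1 - a1*d1 + b2*c2 - a2*d2 in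
  let P := x*s+y*t in
  let Qi := x*t - y*s in
  let N := c1^2+d1^2+c2^2+d2^2 in
  let QH := r*(s^2+t^2) + 2*(P*BR - Qi*BI) + rh*N in
  let DD := (r*P+rh*BR)^2 + (r*Qi - rh*BI)^2 in
  0 < A -> 0 < F1 -> 0 < F1 + rh*r*F2 ->
  0 < s^2+t^2+N ->
  0 < 4*A^2/rh^2*(s^2+t^2) + F1*QH + F2*DD.
Proof.
  intros rh r BR BI P Qi N QH DD HA HF1 HF2 Hxi.
  assert (Hrh : 0 < rh) by (unfold rh; clear -x; nra).
  assert (Hr : 0 <= r) by (unfold r; clear -x; nra).
  assert (HN : 0 <= N) by (unfold N; clear -x; nra).
  assert (Hlag : r*N - (BR^2+BI^2) = (a1*c2 - b1*d2 - a2*c1 + b2*d1)^2 + (a1*d2 + b1*c2 - a2*d1 - b2*c1)^2)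
    by (unfold r, N, BR, BI; ring).
  assert (HPQ : P^2 + Qi^2 = (rh - 1)*(s^2+t^2)) by (unfold P, Qi, rh; ring).
  assert (EQH : QH = r*(s^2+t^2) + 2*(P*BR - Qi*BI) + rh*N) by reflexivity.
  assert (EDD : DD = (r*P+rh*BR)^2 + (r*Qi - rh*BI)^2) by reflexivity.
  assert (Er : r = a1^2 + b1^2 + a2^2 + b2^2) by reflexivity.
  assert (EBR : BR = a1*c1+b1*d1+a2*c2+b2*d2) by reflexivity.
  assert (EBI : BI = b1*c1 - a1*d1 + b2*c2 - a2*d2) by reflexivity.
  assert (EP : P = x*s+y*t) by reflexivity.
  assert (EQi : Qi = x*t - y*s) by reflexivity.
  clearbody rh r BR BI P Qi N QH DD.
  assert (Hc : rh*r*QH - DD = r^2*(s^2+t^2) + rh^2*(r*N - (BR^2+BI^2))).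
  { rewrite EQH, EDD.
    assert (E: (r*P+rh*BR)^2 + (r*Qi - rh*BI)^2 = r^2*(P^2+Qi^2) + 2*r*rh*(P*BR - Qi*BI) + rh^2*(BR^2+BI^2)) by ring.
    rewrite E, HPQ. ring. }
  assert (HDD : 0 <= DD) by (rewrite EDD; apply Rplus_le_le_0_compat; apply pow2_ge_0).
  assert (Hst : 0 <= s^2+t^2) by nra.
  assert (Hlag0 : 0 <= r*N - (BR^2+BI^2)).
  { rewrite Hlag. apply Rplus_le_le_0_compat; apply pow2_ge_0. }
  assert (Hc0 : 0 <= rh*r*QH).
  { assert (0 <= r^2*(s^2+t^2)) by (apply Rmult_le_pos; [apply pow2_ge_0|exact Hst]).
    assert (0 <= rh^2*(r*N - (BR^2+BI^2))) by (apply Rmult_le_pos; [apply pow2_ge_0|exact Hlag0]).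
    clear -Hc HDD H H0. lra. }
  assert (HQH : 0 <= QH).
  { destruct (Rle_lt_or_eq_dec 0 r Hr) as [Hrp|Hr0].
    - assert (0 < rh*r) by (apply Rmult_lt_0_compat; auto).
      clear -Hc0 H. nra.
    - assert (a1 = 0 /\ b1 = 0 /\ a2 = 0 /\ b2 = 0) as (-> & -> & -> & ->).
      { rewrite Er in Hr0. clear -Hr0.
        assert (h1 := pow2_ge_0 a1). assert (h2 := pow2_ge_0 b1).
        assert (h3 := pow2_ge_0 a2). assert (h4 := pow2_ge_0 b2).
        repeat split; apply sq0; lra. }
      assert (QH = rh*N) by (rewrite EQH, EBR, EBI, Er; ring).
      rewrite H.
      apply Rmult_le_pos; lra. }
  assert (Hm : 4*A^2/rh^2*(s^2+t^2) + Rmin F1 (F1 + rh*r*F2) * QH <= 4*A^2/rh^2*(s^2+t^2) + F1*QH + F2*DD).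
  { destruct (Rle_or_lt 0 F2).
    - assert (Rmin F1 (F1 + rh*r*F2) <= F1) by apply Rmin_l.
      assert (0 <= F2*DD) by (apply Rmult_le_pos; auto).
      assert (Rmin F1 (F1 + rh*r*F2) * QH <= F1 * QH) by (apply Rmult_le_compat_r; auto).
      lra.
    - assert (Rmin F1 (F1 + rh*r*F2) <= F1 + rh*r*F2) by apply Rmin_r.
      assert (F2*DD >= F2 * (rh*r*QH)).
      { assert (DD <= rh*r*QH) by (clear -Hc Hst Hlag0 ; assert (0 <= r^2*(s^2+t^2)) by (apply Rmult_le_pos; [apply pow2_ge_0|exact Hst]);
          assert (0 <= rh^2*(r*N - (BR^2+BI^2))) by (apply Rmult_le_pos; [apply pow2_ge_0|exact Hlag0]); lra).
        clear -H H1. nra. }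
      assert (Rmin F1 (F1 + rh*r*F2) * QH <= (F1 + rh*r*F2) * QH) by (apply Rmult_le_compat_r; auto).
      clear -H0 H1 H2. lra. }
  assert (Hmp : 0 < Rmin F1 (F1 + rh*r*F2)) by (apply Rmin_glb_lt; auto).
  assert (HA2 : 0 < 4*A^2/rh^2) by (apply Rdiv_lt_0_compat; [ clear -HA; nra | apply pow_lt; auto]).
  destruct (Rle_lt_or_eq_dec 0 (s^2+t^2) Hst) as [Hs|Hs].
  - assert (0 < 4*A^2/rh^2*(s^2+t^2)) by (apply Rmult_lt_0_compat; auto).
    assert (0 <= Rmin F1 (F1 + rh*r*F2) * QH) by (apply Rmult_le_pos; lra).
    clear -Hm H H0. lra.
  - assert (s = 0 /\ t = 0) as (-> & ->).
    { clear -Hs. assert (h1 := pow2_ge_0 s). assert (h2 := pow2_ge_0 t).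
      split; apply sq0; lra. }
    assert (QH = rh*N) by (rewrite EQH, EP, EQi; ring).
    assert (0 < N) by (clear -Hxi; lra).
    assert (0 < Rmin F1 (F1 + rh*r*F2) * QH) by (rewrite H; apply Rmult_lt_0_compat; auto; apply Rmult_lt_0_compat; auto).
    replace (4 * A ^ 2 / rh ^ 2 * (0 ^ 2 + 0 ^ 2)) with 0 in Hm by (field; lra).
    lra.
Qed.

Lemma rho_ne p : rho p <> 0.
Proof. unfold rho. nra. Qed.

Lemma herm_eq a f p xi : smooth_fun f ->
  let x := p 0%nat in let y := p 1%nat in let a1 := p 2%nat in let b1 := p 3%nat in
  let a2 := p 4%nat in let b2 := p 5%nat in
  let s := fst (xi 0%nat) in let t := snd (xi 0%nat) in
  let c1 := fst (xi 1%nat) in let d1 := snd (xi 1%nat) in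
  let c2 := fst (xi 2%nat) in let d2 := snd (xi 2%nat) in
  let F1 := Derive f (tau p) in let F2 := Derive_n f 2 (tau p) in
  let rh := 1 + x^2 + y^2 in
  let r := a1^2 + b1^2 + a2^2 + b2^2 in
  let BR := a1*c1+b1*d1+a2*c2+b2*d2 in
  let BI := b1*c1 - a1*d1 + b2*c2 - a2*d2 in
  let P := x*s+y*t in
  let Qi := x*t - y*s in
  let N := c1^2+d1^2+c2^2+d2^2 in
  let QH := r*(s^2+t^2) + 2*(P*BR - Qi*BI) + rh*N in
  let DD := (r*P+rh*BR)^2 + (r*Qi - rh*BI)^2 in
  herm_form (fun j k => omega_co a f j k p) xi = 4*a^2/rh^2*(s^2+t^2) + F1*QH + F2*DD.
Proof.
  intros sf. intros.
  unfold herm_form, sum3.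
  rewrite !(omega_entry a f _ _ p sf) by lia.
  assert (Hr := rho_ne p).
  unfold DD, QH, N, Qi, P, BI, BR, r, rh, F1, F2, s, t, c1, d1, c2, d2, x, y, a1, b1, a2, b2.
  unfold Gm, Ef, dtau, d2tau, d2phi, rr. unfold rho in *. simpl.
  unfold Cmult, Cplus, Cconj, Re; simpl. field. simpl in Hr. intro HH; apply Hr; rewrite <- HH; ring.
Qed.

Lemma det_eq a f p : smooth_fun f ->
  det3 (fun j k => omega_co a f j k p) =
  ((4*a^2 + tau p * Derive f (tau p)) *
   ((Derive f (tau p))^2 + tau p * Derive f (tau p) * Derive_n f 2 (tau p)), 0).
Proof.
  intros sf. unfold det3.
  rewrite !(omega_entry a f _ _ p sf) by lia.
  assert (Hr := rho_ne p).
  unfold Gm, Ef.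
  set (F1 := Derive f (tau p)). set (F2 := Derive_n f 2 (tau p)).
  clearbody F1 F2.
  unfold tau.
  unfold dtau, d2tau, d2phi, rr. unfold rho in *. simpl.
  unfold Cmult, Cplus, Cminus, Copp; simpl.
  apply injective_projections; simpl; field; intro HH; apply Hr; rewrite <- HH; ring.
Qed.

Lemma tau_nonneg p : 0 <= tau p.
Proof.
  unfold tau. apply Rmult_le_pos.
  - assert (h1 := pow2_ge_0 (p 0%nat)). assert (h2 := pow2_ge_0 (p 1%nat)). lra.
  - assert (h1 := pow2_ge_0 (p 2%nat)). assert (h2 := pow2_ge_0 (p 3%nat)).
    assert (h3 := pow2_ge_0 (p 4%nat)). assert (h4 := pow2_ge_0 (p 5%nat)). lra.
Qed.

Lemma Cnz (z : C) : z <> RtoC 0 -> 0 < fst z ^ 2 + snd z ^ 2.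
Proof.
  destruct z as [u v]; simpl; intros H.
  destruct (Rle_or_lt (u^2+v^2) 0) as [H1|H1]; auto.
  exfalso; apply H.
  assert (h1 := pow2_ge_0 u). assert (h2 := pow2_ge_0 v).
  assert (u = 0) by (apply sq0; lra). assert (v = 0) by (apply sq0; lra).
  subst. reflexivity.
Qed.

Theorem mainTheorem7 (a : R) (f : R -> R) (c : R) :
  0 < a ->
  smooth_fun f ->
  0 < c ->
  (forall t, 0 <= t -> 0 < Derive f t) ->
  (forall t, 0 <= t -> 0 < Derive f t + t * Derive_n f 2 t) ->
  (forall t, 0 <= t ->
     (4 * a^2 + t * Derive f t) *
     ((Derive f t)^2 + t * Derive f t * Derive_n f 2 t) = c) ->
  (* omega_{co,a} is a Kaehler metric: Hermitian and positive definite everywhere *)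
  (forall p j k, (j < 3)%nat -> (k < 3)%nat ->
     omega_co a f k j p = Cconj (omega_co a f j k p)) /\
  (forall p (xi : nat -> C), (exists j, (j < 3)%nat /\ xi j <> RtoC 0) ->
     0 < herm_form (fun j k => omega_co a f j k p) xi) /\
  (* Calabi-Yau: omega^3 = lambda (sqrt -1)^9 Omega /\ Omega^bar, lambda > 0 constant *)
  (exists lambda, 0 < lambda /\
     forall p, omega_cubed_coeff a f p = (RtoC lambda * OmegaOmegabar_coeff p)%C).
Proof.
  intros Ha sf Hc Hf1 Hf2 Hcy.
  split; [|split].
  - intros p j k Hj Hk.
    rewrite !(omega_entry a f _ _ p sf) by auto.
    unfold Gm, Ef. set (F1 := Derive f (tau p)). set (F2 := Derive_n f 2 (tau p)).
    clearbody F1 F2.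
    do 3 (destruct j as [|j]; [
      do 3 (destruct k as [|k]; [unfold d2tau, d2phi, dtau; simpl; unfold Cconj; simpl;
            apply injective_projections; simpl; field; try apply rho_ne |]); lia |]).
    lia.
  - intros p xi [j [Hj Hxj]].
    assert (H := herm_eq a f p xi sf). cbv zeta in H. rewrite H.
    assert (Ht := tau_nonneg p).
    assert (Etau : tau p = (1 + p 0%nat ^ 2 + p 1%nat ^ 2) *
      (p 2%nat ^ 2 + p 3%nat ^ 2 + p 4%nat ^ 2 + p 5%nat ^ 2)) by reflexivity.
    pose proof (key (p 0%nat) (p 1%nat) (p 2%nat) (p 3%nat) (p 4%nat) (p 5%nat)
      (fst (xi 0%nat)) (snd (xi 0%nat)) (fst (xi 1%nat)) (snd (xi 1%nat))
      (fst (xi 2%nat)) (snd (xi 2%nat)) a (Derive f (tau p)) (Derive_n f 2 (tau p))) as K.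
    cbv zeta in K. apply K; clear K H.
    + exact Ha.
    + apply Hf1; auto.
    + rewrite <- Etau. apply Hf2; auto.
    + assert (h0 := pow2_ge_0 (fst (xi 0%nat))). assert (h1 := pow2_ge_0 (snd (xi 0%nat))).
      assert (h2 := pow2_ge_0 (fst (xi 1%nat))). assert (h3 := pow2_ge_0 (snd (xi 1%nat))).
      assert (h4 := pow2_ge_0 (fst (xi 2%nat))). assert (h5 := pow2_ge_0 (snd (xi 2%nat))).
      assert (Hz := Cnz _ Hxj).
      destruct j as [|[|[|j]]]; [lra|lra|lra|lia].
  - exists (6 * c). split; [lra|].
    intros p. unfold omega_cubed_coeff. rewrite (det_eq a f p sf).
    rewrite (Hcy (tau p) (tau_nonneg p)).
    unfold OmegaOmegabar_coeff, Cmult, RtoC; apply injective_projections; simpl; ring.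
Qed.
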